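(* For any integer $m\ge1$ and any $d\ge2$, there is a pool $S_u\subseteq\mathbb{R}_+^d$ of size $m$ whose auditing complexity with respect to $\mathcal{H}_\Box^-$ is $m$.
   Context: For $\mathbf a\in\mathbb{R}_+^d$, $h_{\mathbf a}(x)=2\mathbb{I}[\exists i\in[d],\ x[i]\ge a[i]]-1$ and $h^-_{\mathbf a}=-h_{\mathbf a}$; $\mathcal{H}_\Box^-=\{h^-_{\mathbf a}:\mathbf a\in\mathbb{R}_+^d\}$ (negatives outside the rectangle). The auditing complexity of a finite unlabeled pool $S_u$ with respect to a class $\mathcal{H}$ is the minimum, over algorithms that sequentially query labels of points of $S_u$ and that for every labeling of $S_u$ consistent with some $h\in\mathcal{H}$ output (with probability 1) a hypothesis with zero error on the labeled pool, of the worst case (over such labelings) number of queried points whose label is $-1$. *)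

(* Defs.v *)
From HB Require Import structures.
From mathcomp Require Import all_boot all_order all_algebra.
From mathcomp Require Import reals.
Set Implicit Arguments. Unset Strict Implicit. Unset Printing Implicit Defensive.
Import Order.TTheory GRing.Theory Num.Theory.
Local Open Scope ring_scope.

(* Labels: [true] stands for +1, [false] for -1. *)

(* h^-_a(v) = - h_a(v), where h_a(v) = +1 iff exists i, v[i] >= a[i].
   Hence h^-_a(v) = +1 iff for all i, v[i] < a[i]. *)
Definition hminus (R : realType) (d : nat) (a v : 'rV[R]_d) : bool :=
  [forall i : 'I_d, v 0 i < a 0 i].

Definition consistent (R : realType) (m d : nat) (x : 'I_m -> 'rV[R]_d)
  (L : 'I_m -> bool) : Prop :=
  exists a : 'rV[R]_d, (forall i, 0 <= a 0 i) /\ forall j, L j = hminus a (x j).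

(* A (deterministic, adaptive) auditing algorithm on a pool of m points:
   a finite decision tree. [AQuery j tpos tneg] queries the label of point j
   and continues with [tpos] if it is +1, [tneg] if it is -1.
   [ALeaf f] stops and outputs the hypothesis f (its values on the pool). *)
Inductive atree (m : nat) : Type :=
| ALeaf : ('I_m -> bool) -> atree m
| AQuery : 'I_m -> atree m -> atree m -> atree m.

Fixpoint aoutput (m : nat) (t : atree m) (L : 'I_m -> bool) : 'I_m -> bool :=
  match t with
  | ALeaf f => f
  | AQuery j tp tn => if L j then aoutput tp L else aoutput tn L
  end.

Fixpoint aqueried (m : nat) (t : atree m) (L : 'I_m -> bool) : seq 'I_m :=
  match t with
  | ALeaf _ => [::]
  | AQuery j tp tn => j :: (if L j then aqueried tp L else aqueried tn L)
  end.

Definition acost (m : nat) (t : atree m) (L : 'I_m -> bool) : nat :=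
  #|[set j | (j \in aqueried t L) && ~~ L j]|.

Definition acorrect (R : realType) (m d : nat) (x : 'I_m -> 'rV[R]_d)
  (t : atree m) : Prop :=
  forall L, consistent x L -> forall j, aoutput t L j = L j.

Definition audits_within (R : realType) (m d : nat) (x : 'I_m -> 'rV[R]_d)
  (t : atree m) (n : nat) : Prop :=
  forall L, consistent x L -> (acost t L <= n)%N.

Definition auditing_complexity_is (R : realType) (m d : nat)
  (x : 'I_m -> 'rV[R]_d) (n : nat) : Prop :=
  (exists t, acorrect x t /\ audits_within x t n) /\
  (forall t k, acorrect x t -> audits_within x t k -> (n <= k)%N).

(* Main.v *)
Require Import Defs.
From HB Require Import structures.
From mathcomp Require Import all_boot all_order all_algebra.
From mathcomp Require Import reals zify.
Import Order.TTheory GRing.Theory Num.Theory.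
Local Open Scope ring_scope.
Set Implicit Arguments. Unset Strict Implicit.

Fixpoint build (m : nat) (s : seq 'I_m) (f : 'I_m -> bool) : atree m :=
  match s with
  | [::] => ALeaf f
  | j :: s' => AQuery j (build s' (fun k => if k == j then true else f k))
                        (build s' (fun k => if k == j then false else f k))
  end.

Lemma build_out (m : nat) (s : seq 'I_m) f L k :
  aoutput (build s f) L k = if k \in s then L k else f k.
Proof.
elim: s f => [|j s IH] f //=.
case E: (L j); rewrite IH in_cons; case: (k =P j) => [->|_] /=; rewrite ?E //; by case: (j \in s).
Qed.

Lemma out_agree (m : nat) (t : atree m) L L' :
  (forall k, k \in aqueried t L -> L k = L' k) -> aoutput t L = aoutput t L'.
Proof.
elim: t => [f|j tp IHp tn IHn] //= H.
have Hj : L j = L' j by apply: H; rewrite in_cons eqxx.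
rewrite -Hj; case E: (L j).
- apply: IHp => k Hk; apply: H; by rewrite in_cons E Hk orbT.
- apply: IHn => k Hk; apply: H; by rewrite in_cons E Hk orbT.
Qed.

Theorem theorem4 (R : realType) (m d : nat) :
  (1 <= m)%N -> (2 <= d)%N ->
  exists x : 'I_m -> 'rV[R]_d,
    injective x /\ (forall j i, 0 <= x j 0 i) /\ auditing_complexity_is x m.
Proof.
move=> m1 d2.
have d0 : (0 < d)%N by apply: leq_trans d2.
pose i0 : 'I_d := Ordinal d0.
pose i1 : 'I_d := Ordinal d2.
pose x : 'I_m -> 'rV[R]_d := fun j =>
  \row_i (if val i == 0%N then (2 * (j + 1))%:R
          else if val i == 1%N then (2 * (m - j))%:R else 0).
have x0 : forall j, x j 0 i0 = (2 * (j + 1))%:R by move=> j; rewrite mxE.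
have x1 : forall j, x j 0 i1 = (2 * (m - j))%:R by move=> j; rewrite mxE.
exists x; split.
  move=> j k E; have : x j 0 i0 = x k 0 i0 by rewrite E.
  rewrite !x0 => /eqP.
  rewrite eqr_nat => /eqP H; apply: val_inj => /=; lia.
split.
  move=> j i; rewrite mxE; case: ifP => _; first exact: ler0n.
  case: ifP => _ //; exact: ler0n.
split.
  exists (build (enum 'I_m) (fun _ => true)); split.
    by move=> L _ j; rewrite build_out mem_enum.
  move=> L _; rewrite /acost.
  by apply: leq_trans (max_card _) _; rewrite card_ord.
move=> t n Hc Hk.
pose L0 : 'I_m -> bool := fun _ => false.
have cL0 : consistent x L0.
  exists 0; split=> [i|j]; first by rewrite mxE.
  rewrite /hminus /L0; apply/esym/negbTE/forallP => /(_ i0).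
  by rewrite x0 mxE ltNge ler0n.
have allq : forall j, j \in aqueried t L0.
  move=> j; apply/negPn/negP => Hj.
  pose L1 : 'I_m -> bool := fun k => k == j.
  have cL1 : consistent x L1.
    pose a : 'rV[R]_d := \row_i (if val i == 0%N then (2 * (j + 1) + 1)%:R
          else if val i == 1%N then (2 * (m - j) + 1)%:R else 1).
    exists a; split=> [i|k].
      by rewrite mxE; do 2?case: ifP => _; rewrite ?ler0n ?ler01.
    rewrite /hminus /L1; case: eqP => [->|ne].
      apply/esym/forallP => i; rewrite !mxE.
      by do 2?case: ifP => _; rewrite ?ltr_nat ?addn1 ?ltr01.
    apply/esym/negbTE/forallP => H.
    have := H i0; have := H i1; rewrite !mxE /= !ltr_nat => h1 h0.
    apply: ne; apply: val_inj.
    change (nat_of_ord k = nat_of_ord j); have := ltn_ord k; have := ltn_ord j; lia.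
  have e : aoutput t L0 = aoutput t L1.
    apply: out_agree => k Hq; rewrite /L0 /L1; apply/esym/negbTE/eqP => ekj.
    by move: Hj; rewrite -ekj Hq.
  have := Hc _ cL0 j; have := Hc _ cL1 j; rewrite e => ->.
  by rewrite /L1 eqxx.
have := Hk _ cL0; rewrite /acost.
suff -> : [set j | (j \in aqueried t L0) && ~~ L0 j] = setT by rewrite cardsT card_ord.
by apply/setP => j; rewrite !inE allq.
Qed.
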